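(* Let $R$ be a Noetherian hyperring. The following are equivalent: (i) $R$ is Artinian; (ii) $Spec(R)$ with the Zariski topology is discrete and finite; (iii) $Spec(R)$ with the Zariski topology is discrete.
   Context: Standing conventions. A hyperring means a commutative Krasner hyperring with identity: a set $R$ with a hyperoperation $+:R\times R\to\mathcal P^*(R)$ (nonempty subsets; for subsets $A,B$ one sets $A+B=\bigcup_{a\in A,b\in B}a+b$) and a binary operation $\cdot$ such that: $+$ is associative and commutative; there is $0\in R$ with $0+x=\{x\}$ for all $x$; every $x$ has a unique $-x$ with $0\in x+(-x)$; $z\in x+y$ implies $y\in -x+z$ and $x\in z-y$; $(R,\cdot)$ is a commutative monoid with identity $1$; $0\cdot x=0$; and $x(y+z)=xy+xz$. A hyperideal of $R$ is a nonempty $I\subseteq R$ with $a-b\subseteq I$ and $ra\in I$ for all $a,b\in I$, $r\in R$. $R$ is Noetherian (resp. Artinian) if every ascending (resp. descending) chain of hyperideals of $R$ stabilizes. A proper hyperideal $P$ is prime if $ab\in P$ implies $a\in P$ or $b\in P$. $Spec(R)$ is the set of prime hyperideals of $R$; for $S\subseteq R$, $V(S)=\{P\in Spec(R): S\subseteq P\}$. The Zariski topology on $Spec(R)$ is the topology whose closed sets are the sets $V(I)$, $I$ a hyperideal of $R$. *)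

(* Defs.v *)
From Stdlib Require Import List Arith.

Set Implicit Arguments.

(* A commutative Krasner hyperring with identity.  The hyperoperation
   x + y is the set [hadd x y : T -> Prop]. *)
Record hyperring := HyperRing {
  carrier :> Type;
  hadd : carrier -> carrier -> carrier -> Prop;
  hmul : carrier -> carrier -> carrier;
  hzero : carrier;
  hone : carrier;
  hneg : carrier -> carrier;
  hadd_nonempty : forall x y, exists z, hadd x y z;
  (* associativity: (x + y) + z = x + (y + z) as sets *)
  hadd_assoc : forall x y z w,
      (exists u, hadd x y u /\ hadd u z w) <-> (exists v, hadd y z v /\ hadd x v w);
  hadd_comm : forall x y z, hadd x y z <-> hadd y x z;
  hadd_zero : forall x z, hadd hzero x z <-> z = x;
  hadd_neg : forall x, hadd x (hneg x) hzero;
  hneg_unique : forall x y, hadd x y hzero -> y = hneg x;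
  hadd_rev : forall x y z, hadd x y z -> hadd (hneg x) z y /\ hadd z (hneg y) x;
  hmul_assoc : forall x y z, hmul x (hmul y z) = hmul (hmul x y) z;
  hmul_comm : forall x y, hmul x y = hmul y x;
  hmul_one : forall x, hmul hone x = x;
  hmul_zero : forall x, hmul hzero x = hzero;
  (* distributivity: x (y + z) = x y + x z as sets *)
  hmul_distr : forall x y z w,
      (exists u, hadd y z u /\ w = hmul x u) <-> hadd (hmul x y) (hmul x z) w
}.

Section Defs.
Variable R : hyperring.

Definition hsubset (A B : R -> Prop) : Prop := forall x, A x -> B x.
Definition hseteq (A B : R -> Prop) : Prop := forall x, A x <-> B x.

Definition hyperideal (I : R -> Prop) : Prop :=
  (exists a, I a) /\
  (forall a b c, I a -> I b -> hadd R a (hneg R b) c -> I c) /\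
  (forall r a, I a -> I (hmul R r a)).

Definition noetherian : Prop :=
  forall I : nat -> R -> Prop,
    (forall n, hyperideal (I n)) ->
    (forall n, hsubset (I n) (I (S n))) ->
    exists N, forall n, N <= n -> hseteq (I n) (I N).

Definition artinian : Prop :=
  forall I : nat -> R -> Prop,
    (forall n, hyperideal (I n)) ->
    (forall n, hsubset (I (S n)) (I n)) ->
    exists N, forall n, N <= n -> hseteq (I n) (I N).

Definition prime_hyperideal (P : R -> Prop) : Prop :=
  hyperideal P /\ (exists x, ~ P x) /\
  (forall a b, P (hmul R a b) -> P a \/ P b).

Definition Spec : Type := { P : R -> Prop | prime_hyperideal P }.

Definition V (S : R -> Prop) : Spec -> Prop := fun P => hsubset S (proj1_sig P).

Definition zariski_closed (C : Spec -> Prop) : Prop :=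
  exists I, hyperideal I /\ forall P, C P <-> V I P.

Definition zariski_open (U : Spec -> Prop) : Prop :=
  zariski_closed (fun P => ~ U P).

Definition spec_discrete : Prop := forall U : Spec -> Prop, zariski_open U.

(* Spec(R) is finite (prime hyperideals identified extensionally) *)
Definition spec_finite : Prop :=
  exists l : list Spec, forall P : Spec, exists Q, In Q l /\ hseteq (proj1_sig P) (proj1_sig Q).

End Defs.

(* Main.v *)
Require Import Defs.
From Stdlib Require Import List Arith Lia.
From Stdlib Require Import Classical ClassicalEpsilon FunctionalExtensionality PropExtensionality ProofIrrelevance.

Section HR.
Variable R : hyperring.
Local Notation add := (hadd R).
Local Notation mul := (hmul R).
Local Notation neg := (hneg R).
Local Notation z0 := (hzero R).
Local Notation one := (hone R).
Local Notation hsub := (hsubset R).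
Local Notation heq := (hseteq R).

Lemma neg_neg x : neg (neg x) = x.
Proof. symmetry. apply hneg_unique. apply hadd_comm. apply hadd_neg. Qed.

Lemma add0 x : add z0 x x.
Proof. apply hadd_zero; reflexivity. Qed.

Lemma add0r x : add x z0 x.
Proof. apply hadd_comm, add0. Qed.

Lemma mul0r x : mul x z0 = z0.
Proof. rewrite hmul_comm; apply hmul_zero. Qed.

Lemma mul1r x : mul x one = x.
Proof. rewrite hmul_comm; apply hmul_one. Qed.

Lemma mul_neg x y : mul x (neg y) = neg (mul x y).
Proof.
  apply hneg_unique. apply (proj1 (hmul_distr R x y (neg y) z0)).
  exists z0. split. apply hadd_neg. symmetry; apply mul0r.
Qed.

Lemma negE x : neg x = mul (neg one) x.
Proof. rewrite hmul_comm, mul_neg, mul1r. reflexivity. Qed.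

Lemma neg_add x y z : add x y z -> add (neg x) (neg y) (neg z).
Proof.
  intro H. rewrite !(negE x), (negE y), (negE z).
  apply hmul_distr. exists z; auto.
Qed.

Lemma swap x y z w u v c :
  add x y u -> add z w v -> add u v c ->
  exists p q, add x z p /\ add y w q /\ add p q c.
Proof.
  intros H1 H2 H3.
  destruct (proj1 (hadd_assoc R x y v c) (ex_intro _ u (conj H1 H3))) as [s [Hs1 Hs2]].
  apply hadd_comm in Hs1.
  destruct (proj1 (hadd_assoc R z w y s) (ex_intro _ v (conj H2 Hs1))) as [q [Hq1 Hq2]].
  destruct (proj2 (hadd_assoc R x z q c) (ex_intro _ s (conj Hq2 Hs2))) as [p [Hp1 Hp2]].
  exists p, q. split; auto. split; auto. apply hadd_comm; auto.
Qed.

Section Ideal.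
Variable I : R -> Prop.
Hypothesis HI : hyperideal R I.

Lemma id0 : I z0.
Proof. destruct HI as [[a Ha] [Hd _]]. apply (Hd a a); auto. apply hadd_neg. Qed.

Lemma idneg a : I a -> I (neg a).
Proof. intro Ha. destruct HI as [_ [Hd _]]. apply (Hd z0 a); auto. apply id0. apply add0. Qed.

Lemma idadd a b c : I a -> I b -> add a b c -> I c.
Proof.
  intros Ha Hb H. destruct HI as [_ [Hd _]]. apply (Hd a (neg b)); auto.
  apply idneg; auto. rewrite neg_neg; auto.
Qed.

Lemma idmul r a : I a -> I (mul r a).
Proof. destruct HI as [_ [_ Hm]]. auto. Qed.

Lemma idmulr r a : I a -> I (mul a r).
Proof. rewrite hmul_comm. apply idmul. Qed.

Lemma idone : I one -> forall x, I x.
Proof. intros H x. rewrite <- (mul1r x). apply idmul; auto. Qed.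

End Ideal.

Definition Ssum (I : R -> Prop) a : R -> Prop :=
  fun y => exists i r, I i /\ add i (mul a r) y.
Definition Col (I : R -> Prop) a : R -> Prop := fun x => I (mul a x).

Lemma Ssum_ideal I a : hyperideal R I -> hyperideal R (Ssum I a).
Proof.
  intro HI. split; [|split].
  - exists z0. exists z0, z0. split. apply id0; auto. rewrite mul0r. apply add0.
  - intros y y' c [i [r [Hi Hy]]] [i' [r' [Hi' Hy']]] Hc.
    apply neg_add in Hy'. rewrite <- mul_neg in Hy'.
    destruct (swap _ _ _ _ _ _ _ Hy Hy' Hc) as [p [q [Hp [Hq Hpq]]]].
    destruct (proj2 (hmul_distr R a r (neg r') q) Hq) as [t [_ Ht]].
    exists p, t. split. apply (idadd I HI i (neg i')); auto. apply idneg; auto.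
    rewrite <- Ht; auto.
  - intros s y [i [r [Hi Hy]]]. exists (mul s i), (mul s r). split. apply idmul; auto.
    replace (mul a (mul s r)) with (mul s (mul a r)).
    apply hmul_distr. exists y; auto.
    rewrite !hmul_assoc, (hmul_comm R s a). reflexivity.
Qed.

Lemma Col_ideal I a : hyperideal R I -> hyperideal R (Col I a).
Proof.
  intro HI. split; [|split].
  - exists z0. unfold Col. rewrite mul0r. apply id0; auto.
  - intros x y c Hx Hy Hc. unfold Col in *.
    apply (idadd I HI (mul a x) (mul a (neg y))); auto.
    rewrite mul_neg. apply idneg; auto.
    apply hmul_distr. exists c; auto.
  - intros r x Hx. unfold Col in *. rewrite hmul_assoc, (hmul_comm R a r), <- hmul_assoc.
    apply idmul; auto.
Qed.

Lemma Ssum_incl I a : hsub I (Ssum I a).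
Proof. intros x Hx. exists x, z0. split; auto. rewrite mul0r. apply add0r. Qed.

Lemma Ssum_a I a : hyperideal R I -> Ssum I a a.
Proof. intro HI. exists z0, one. split. apply id0; auto. rewrite mul1r. apply add0. Qed.

Lemma Col_incl I a : hyperideal R I -> hsub I (Col I a).
Proof. intros HI x Hx. unfold Col. apply idmul; auto. Qed.

Lemma Ssum_mono I J a : hsub I J -> hsub (Ssum I a) (Ssum J a).
Proof. intros H y [i [r [Hi Hy]]]. exists i, r; auto. Qed.

Lemma Col_mono I J a : hsub I J -> hsub (Col I a) (Col J a).
Proof. intros H y Hy. unfold Col in *; auto. Qed.

Lemma key I J a : hyperideal R I -> hyperideal R J -> hsub I J ->
  hsub (Ssum J a) (Ssum I a) -> hsub (Col J a) (Col I a) -> hsub J I.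
Proof.
  intros HI HJ HIJ HS HC x Hx.
  destruct (HS x (Ssum_incl J a x Hx)) as [i [r [Hi Hxr]]].
  destruct (hadd_rev R _ _ _ Hxr) as [H1 _].
  assert (Hc : Col J a r).
  { unfold Col. apply (idadd J HJ (neg i) x); auto. apply idneg; auto. }
  apply HC in Hc. unfold Col in Hc.
  apply (idadd I HI i (mul a r)); auto.
Qed.


Lemma noeth_max (HN : noetherian R) (F : (R -> Prop) -> Prop) :
  (forall J, F J -> hyperideal R J) -> (exists J, F J) ->
  exists J, F J /\ forall K, F K -> hsub J K -> hsub K J.
Proof.
  intros HF [J0 HJ0]. apply NNPP; intro Hno.
  assert (Hstep : forall J, F J -> exists K, F K /\ hsub J K /\ ~ hsub K J).
  { intros J HJ. apply NNPP; intro H2. apply Hno. exists J. split; auto.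
    intros K HK HJK. apply NNPP; intro H3. apply H2. exists K; auto. }
  pose (next := fun s : {J | F J} =>
    let e := constructive_indefinite_description _ (Hstep (proj1_sig s) (proj2_sig s)) in
    exist F (proj1_sig e) (proj1 (proj2_sig e))).
  pose (sq := fix sq (n : nat) : {J | F J} :=
          match n with O => exist F J0 HJ0 | S m => next (sq m) end).
  assert (Hsp : forall n, hsub (proj1_sig (sq n)) (proj1_sig (sq (S n)))
                    /\ ~ hsub (proj1_sig (sq (S n))) (proj1_sig (sq n))).
  { intro n. simpl. unfold next. simpl.
    destruct (constructive_indefinite_description _ _) as [K [HK [H1 H2]]]. simpl. auto. }
  destruct (HN (fun n => proj1_sig (sq n))) as [N HNs].
  - intro n. apply HF. apply proj2_sig.
  - intro n. apply Hsp.
  - apply (proj2 (Hsp N)). intros x Hx. apply (HNs (S N)); auto.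
Qed.

Definition stable (I : nat -> R -> Prop) :=
  exists N, forall n, N <= n -> heq (I n) (I N).

Definition Sig (J : R -> Prop) :=
  hyperideal R J /\ exists I : nat -> R -> Prop, (forall n, hyperideal R (I n)) /\
    (forall n, hsub (I (S n)) (I n)) /\ (forall n, hsub J (I n)) /\ ~ stable I.

Lemma desc_le (I : nat -> R -> Prop) : (forall n, hsub (I (S n)) (I n)) ->
  forall m n, m <= n -> hsub (I n) (I m).
Proof.
  intros H m n Hmn. induction Hmn. intros x; auto.
  intros x Hx. apply IHHmn. apply H; auto.
Qed.

Lemma noeth_zd_artin (HN : noetherian R)
  (H0 : forall P, prime_hyperideal R P -> forall K, hyperideal R K ->
        hsub P K -> hsub K P \/ K one) : artinian R.
Proof.
  intros I HI Hdesc. apply NNPP; intro Hns.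
  destruct (noeth_max HN Sig) as [J [[HJ [I' [HI' [Hd' [HJI Hns']]]]] Hmax]].
  - intros J [HJ _]; auto.
  - exists (fun x => x = z0). split.
    + split; [|split].
      * exists z0; auto.
      * intros a b c Ha Hb Hc. subst. pose proof (add0 (neg z0)) as H.
        apply hadd_zero in Hc. subst. symmetry. apply hneg_unique. apply add0.
      * intros r a Ha. subst. apply mul0r.
    + exists I. split; [auto|split; [auto|split; [|auto]]]. intros n x Hx. subst. apply id0; auto.
  - apply Hns'.
    destruct (classic (exists a b, J (mul a b) /\ ~ J a /\ ~ J b)) as [[a [b [Hab [Ha Hb]]]] | Hpr].
    + assert (SA : stable (fun n => Col (I' n) a)).
      { apply NNPP; intro Hn.
        assert (HS : Sig (Col J a)).
        { split. apply Col_ideal; auto.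
          exists (fun n => Col (I' n) a). split; [|split; [|split; [|auto]]].
          - intro n. apply Col_ideal; auto.
          - intro n. apply Col_mono; auto.
          - intro n. apply Col_mono; auto. }
        apply Hb. apply (Hmax _ HS). apply Col_incl; auto. exact Hab. }
      assert (SB : stable (fun n => Ssum (I' n) a)).
      { apply NNPP; intro Hn.
        assert (HS : Sig (Ssum J a)).
        { split. apply Ssum_ideal; auto.
          exists (fun n => Ssum (I' n) a). split; [|split; [|split; [|auto]]].
          - intro n. apply Ssum_ideal; auto.
          - intro n. apply Ssum_mono; auto.
          - intro n. apply Ssum_mono; auto. }
        apply Ha. apply (Hmax _ HS). apply Ssum_incl. apply Ssum_a; auto. }
      destruct SA as [N1 HN1]. destruct SB as [N2 HN2].
      exists (Nat.max N1 N2). intros n Hn.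
      assert (Hn1 : N1 <= n) by lia. assert (Hn2 : N2 <= n) by lia.
      assert (HM1 : N1 <= Nat.max N1 N2) by lia. assert (HM2 : N2 <= Nat.max N1 N2) by lia.
      assert (Hsub : hsub (I' n) (I' (Nat.max N1 N2))) by (apply desc_le; auto).
      assert (Hsub2 : hsub (I' (Nat.max N1 N2)) (I' n)).
      { apply (key (I' n) (I' (Nat.max N1 N2)) a); auto.
        - intros x Hx. apply (HN2 n Hn2). apply (HN2 _ HM2). auto.
        - intros x Hx. apply (HN1 n Hn1). apply (HN1 _ HM1). auto. }
      intro x; split; auto.
    + assert (Hp : forall a b, J (mul a b) -> J a \/ J b).
      { intros a b H. destruct (classic (J a)); auto. destruct (classic (J b)); auto.
        exfalso. apply Hpr. exists a, b; auto. }
      destruct (classic (J one)) as [H1 | H1].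
      * exists 0. intros n _ x. split; intros _; apply idone; auto; apply HJI;
          apply idone; auto.
      * assert (HP : prime_hyperideal R J) by (split; [auto | split; [exists one; auto | auto]]).
        destruct (classic (exists N, hsub (I' N) J)) as [[N HN'] | Hno].
        -- exists N. intros n Hn x. split. apply desc_le; auto.
           intro Hx. apply HJI. apply HN'. auto.
        -- exists 0. intros n _ x.
           assert (Hall : forall m y, I' m y).
           { intros m y. destruct (H0 J HP (I' m) (HI' m) (HJI m)) as [Hs | Ho].
             - exfalso. apply Hno. exists m; auto.
             - apply idone; auto. }
           split; intros _; apply Hall.
Qed.


Lemma prime_proper P : prime_hyperideal R P -> ~ P one.
Proof.
  intros [HP [[x Hx] _]] H1. apply Hx. apply idone; auto.
Qed.

Lemma zd_of_discrete : spec_discrete R -> forall P Q : Spec R,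
  hsub (proj1_sig P) (proj1_sig Q) -> hsub (proj1_sig Q) (proj1_sig P).
Proof.
  intros Hd P Q HPQ. destruct (Hd (fun Q' => Q' <> P)) as [I [HI HIff]].
  assert (VP : V I P) by (apply HIff; intro h; apply h; reflexivity).
  assert (VQ : V I Q) by (intros x Hx; apply HPQ, VP; auto).
  apply HIff in VQ. apply NNPP in VQ. subst. intros x; auto.
Qed.

Lemma H0_of_discrete (HN : noetherian R) : spec_discrete R ->
  forall P, prime_hyperideal R P -> forall K, hyperideal R K ->
        hsub P K -> hsub K P \/ K one.
Proof.
  intros Hd P HP K HK HPK. destruct (classic (K one)) as [H1 | H1]; [right; auto | left].
  destruct (noeth_max HN (fun M => hyperideal R M /\ hsub K M /\ ~ M one)) as [M [[HM [HKM HM1]] Hmax]].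
  - intros J [HJ _]; auto.
  - exists K. split; auto. split; auto. intros x; auto.
  - assert (pM : prime_hyperideal R M).
    { split; auto. split. exists one; auto.
      intros a b Hab. destruct (classic (M a)) as [Ha | Ha]; [left; auto | right].
      assert (HS1 : Ssum M a one).
      { apply NNPP; intro Hn.
        apply Ha. apply (Hmax (Ssum M a)).
        - split. apply Ssum_ideal; auto. split; auto.
          intros x Hx. apply Ssum_incl. auto.
        - apply Ssum_incl.
        - apply Ssum_a; auto. }
      destruct HS1 as [m [r [Hm Hmr]]].
      assert (Hb : add (mul b m) (mul b (mul a r)) (mul b one)).
      { apply hmul_distr. exists one; auto. }
      rewrite mul1r in Hb. refine (idadd M HM _ _ _ (idmul M HM b m Hm) _ Hb).
      rewrite hmul_assoc, (hmul_comm R b a). apply idmulr; auto. }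
    pose proof (zd_of_discrete Hd (exist _ P HP) (exist _ M pM)) as Hz. simpl in Hz.
    intros x Hx. apply Hz. intros y Hy. apply HKM, HPK; auto. apply HKM; auto.
Qed.

Fixpoint pw (x : R) (n : nat) : R := match n with O => one | S m => mul x (pw x m) end.

Lemma pw_prime P : prime_hyperideal R P -> forall x n, P (pw x n) -> P x.
Proof.
  intros HP x n. induction n; simpl; intro H.
  - exfalso. apply (prime_proper P HP); auto.
  - destruct HP as [_ [_ Hm]]. destruct (Hm _ _ H); auto.
Qed.

Lemma artin_zd : artinian R -> forall P Q, prime_hyperideal R P -> prime_hyperideal R Q ->
  hsub P Q -> hsub Q P.
Proof.
  intros HA P Q HP HQ HPQ x Hx. apply NNPP; intro Hnx.
  destruct (HA (fun n y => exists r, y = mul (pw x n) r)) as [N HN].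
  - intro n. split; [|split].
    + exists z0, z0. symmetry; apply mul0r.
    + intros y y' c [r Hr] [r' Hr'] Hc. subst.
      rewrite <- mul_neg in Hc.
      destruct (proj2 (hmul_distr R _ _ _ _) Hc) as [u [_ Hu]]. exists u; auto.
    + intros s y [r Hr]. subst. exists (mul s r).
      rewrite !hmul_assoc, (hmul_comm R s). reflexivity.
  - intros n y [r Hr]. subst. exists (mul x r). simpl.
    rewrite !hmul_assoc, (hmul_comm R x). reflexivity.
  - assert (H1 : exists r, pw x N = mul (pw x (S N)) r).
    { apply (HN (S N)); auto. exists one. rewrite mul1r; auto. }
    destruct H1 as [r Hr]. simpl in Hr.
    set (X := pw x N) in *.
    assert (HXr : X = mul X (mul x r)).
    { rewrite Hr at 1. rewrite !hmul_assoc, (hmul_comm R X x). reflexivity. }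
    assert (H0' : add (mul X one) (mul X (neg (mul x r))) z0).
    { rewrite mul1r, mul_neg, <- HXr. apply hadd_neg. }
    destruct (proj2 (hmul_distr R _ _ _ _) H0') as [u [Hu Hu0]].
    destruct HP as [HPi [HPp HPm]] eqn:EP.
    assert (HPu : P (mul X u)) by (rewrite <- Hu0; apply id0; auto).
    destruct (HPm _ _ HPu) as [HX | HPu'].
    + apply Hnx. apply (pw_prime P HP x N); auto.
    + destruct (hadd_rev R _ _ _ Hu) as [_ H2].
      destruct HQ as [HQi HQr] eqn:EQ.
      apply (prime_proper Q HQ).
      apply (idadd Q HQi u (neg (neg (mul x r)))); auto.
      rewrite neg_neg. apply idmulr; auto.
Qed.

Lemma avoid (Q : R -> Prop) (HQ : prime_hyperideal R Q) (D : Spec R -> Prop) (L : list (Spec R)) :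
  (forall P, In P L -> D P -> exists a, proj1_sig P a /\ ~ Q a) ->
  exists b, (forall P, In P L -> D P -> proj1_sig P b) /\ ~ Q b.
Proof.
  induction L as [|P L IH]; intro H.
  - exists one. split. intros P []. apply prime_proper; auto.
  - destruct IH as [b [Hb HQb]]. { intros P' HP' HD. apply H; simpl; auto. }
    destruct (classic (D P)) as [HD | HD].
    + destruct (H P (or_introl eq_refl) HD) as [a [Ha HQa]].
      exists (mul a b). split.
      * intros P' [E | HP'] HD'.
        -- subst. apply idmulr; auto. apply (proj1 (proj2_sig P')).
        -- apply idmul; auto. apply (proj1 (proj2_sig P')).
      * intro Hab. destruct HQ as [_ [_ Hm]]. destruct (Hm _ _ Hab); auto.
    + exists b. split; auto. intros P' [E | HP'] HD'; [subst; contradiction | auto].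
Qed.

Lemma inter_ideal (G : Spec R -> Prop) : hyperideal R (fun x => forall P, G P -> proj1_sig P x).
Proof.
  split; [|split].
  - exists z0. intros P _. apply id0. apply (proj1 (proj2_sig P)).
  - intros a b c Ha Hb Hc P HP. destruct (proj1 (proj2_sig P)) as [_ [Hd _]].
    apply (Hd a b); auto.
  - intros r a Ha P HP. apply idmul. apply (proj1 (proj2_sig P)). auto.
Qed.

Lemma spec_ext (P Q : Spec R) : heq (proj1_sig P) (proj1_sig Q) -> P = Q.
Proof.
  destruct P as [p hp], Q as [q hq]. simpl. intro H.
  assert (p = q). { apply functional_extensionality. intro x. apply propositional_extensionality. apply H. }
  subst. f_equal. apply proof_irrelevance.
Qed.

Lemma artin_finite : artinian R -> spec_finite R.
Proof.
  intro HA. apply NNPP; intro Hnf.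
  assert (step : forall L : list (Spec R), exists Q : Spec R,
             ~ (forall x, (forall P, In P L -> proj1_sig P x) -> proj1_sig Q x)).
  { intro L. apply NNPP; intro H. apply Hnf. exists L. intro Q.
    assert (HQ : forall x, (forall P, In P L -> proj1_sig P x) -> proj1_sig Q x).
    { apply NNPP; intro H2. apply H. exists Q; auto. }
    destruct (classic (exists P, In P L /\ hsub (proj1_sig P) (proj1_sig Q))) as [[P [HP HPQ]] | Hno].
    - exists P. split; auto. intro x. split; [apply (artin_zd HA); auto | apply HPQ];
        try apply proj2_sig.
    - exfalso. destruct (avoid (proj1_sig Q) (proj2_sig Q) (fun _ => True) L) as [b [Hb HQb]].
      + intros P HP _. apply NNPP; intro H3. apply Hno. exists P. split; auto.
        intros x Hx. apply NNPP; intro H4. apply H3. exists x; auto.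
      + apply HQb. apply HQ. intros P HP. apply Hb; auto. }
  pose (next := fun L => proj1_sig (constructive_indefinite_description _ (step L))).
  pose (Ls := fix Ls (n : nat) : list (Spec R) := match n with O => nil | S m => next (Ls m) :: Ls m end).
  destruct (HA (fun n x => forall P, In P (Ls n) -> proj1_sig P x)) as [N HN].
  - intro n. apply (inter_ideal (fun P => In P (Ls n))).
  - intros n x Hx P HP. apply Hx. simpl. auto.
  - assert (Hs := proj2_sig (constructive_indefinite_description _ (step (Ls N)))).
    simpl in Hs. apply Hs. intros x Hx.
    assert (Hx' : forall P, In P (Ls (S N)) -> proj1_sig P x) by (apply (HN (S N)); auto).
    apply Hx'. simpl. left. reflexivity.
Qed.

Lemma discrete_of_finite : (forall P Q, prime_hyperideal R P -> prime_hyperideal R Q ->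
  hsub P Q -> hsub Q P) -> spec_finite R -> spec_discrete R.
Proof.
  intros Hz [l Hl] U.
  exists (fun x => forall P, ~ U P -> proj1_sig P x). split.
  - apply (inter_ideal (fun P => ~ U P)).
  - intro Q. split.
    + intros HCQ x Hx. exact (Hx Q HCQ).
    + intros HV HU.
      destruct (avoid (proj1_sig Q) (proj2_sig Q) (fun P => ~ U P) l) as [b [Hb HnQ]].
      * intros P HP HCP. apply NNPP; intro Hno.
        assert (HPQ : hsub (proj1_sig P) (proj1_sig Q)).
        { intros x Hx. apply NNPP; intro H4. apply Hno. exists x; auto. }
        assert (E : P = Q).
        { apply spec_ext. intro x. split; [apply HPQ | apply (Hz _ _ (proj2_sig P) (proj2_sig Q) HPQ)]. }
        subst. contradiction.
      * apply HnQ. apply HV. intros P HCP. destruct (Hl P) as [P' [HinP' Heq]].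
        apply spec_ext in Heq. subst. apply Hb; auto.
Qed.

End HR.

Theorem mainTheorem12 (R : hyperring) (HN : noetherian R) :
  (artinian R <-> (spec_discrete R /\ spec_finite R)) /\
  ((spec_discrete R /\ spec_finite R) <-> spec_discrete R).
Proof.
  split; split.
  - intro HA. split.
    + apply discrete_of_finite. apply artin_zd; auto. apply artin_finite; auto.
    + apply artin_finite; auto.
  - intros [Hd _]. apply noeth_zd_artin; auto. apply H0_of_discrete; auto.
  - intros [Hd _]; auto.
  - intro Hd. split; auto. apply artin_finite. apply noeth_zd_artin; auto.
    apply H0_of_discrete; auto.
Qed.
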